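(* Let $n>0$ and $c>0$ be constants and fix $x_0$ with $0<x_0<c$. Let $f\in C(\mathbb{R}_0^+\times\mathbb{R}_0^+,\mathbb{R}_0^+)$ be nondecreasing in its first variable for each fixed second variable, let $w\in C(\mathbb{R}_0^+,\mathbb{R}_0^+)$ be nondecreasing with $w(x)>0$ for $x>0$, and let $\alpha\in C^1(\mathbb{R}_0^+,\mathbb{R}_0^+)$ be nondecreasing with $\alpha(t)\le t$. If $u\in C(\mathbb{R}_0^+,\mathbb{R}_0^+)$ satisfies $$u^n(t)\le c+\int_0^{\alpha(t)}f(t,s)\,(u^n(s)+1)\ln(u^n(s)+1)\,w(u(s))\,ds\qquad\text{for all }t\ge0,$$ then there exists $\tau>0$ such that for all $t\in[0,\tau]$, $$\Psi(G(c))+\int_0^{\alpha(t)}f(t,s)\,ds\in\mathrm{Dom}(\Psi^{-1})$$ and $$u(t)\le\Big\{G^{-1}\Big(\Psi^{-1}\Big[\Psi(G(c))+\int_0^{\alpha(t)}f(t,s)\,ds\Big]\Big)\Big\}^{1/n},$$ where $G(x)=\int_{x_0}^x\frac{ds}{(s+1)\ln(s+1)}$ for $x\ge x_0$, whose inverse is $G^{-1}(y)=e^{e^{y}\ln(x_0+1)}-1$, and $\Psi(x)=\int_1^x\frac{ds}{w\big((e^{e^{s}\ln(x_0+1)}-1)^{1/n}\big)}$ for $x>0$.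
   Context: $\mathbb{R}_0^+=[0,\infty)$. $\Psi$ is strictly increasing on $(0,\infty)$, $\Psi^{-1}$ denotes its inverse, and $\mathrm{Dom}(\Psi^{-1})=\Psi((0,\infty))$. *)

(* Defs.v *)
From Stdlib Require Import Reals Lra ClassicalEpsilon.
Open Scope R_scope.

(* Total Riemann integral: the value of RiemannInt for any integrability proof
   (all such proofs give the same value, RiemannInt_P5).  Only ever applied to
   integrands continuous on the integration interval, which are integrable. *)
Definition Rint (g : R -> R) (a b : R) : R :=
  epsilon (inhabits 0) (fun I => exists pr : Riemann_integrable g a b, RiemannInt pr = I).

Definition rpow (x a : R) : R :=
  if Rlt_dec 0 x then Rpower x a else 0.

Definition cont_nonneg (g : R -> R) : Prop :=
  forall x, 0 <= x -> forall eps, 0 < eps -> exists delta, 0 < delta /\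
    forall y, 0 <= y -> Rabs (y - x) < delta -> Rabs (g y - g x) < eps.

Definition cont2_nonneg (f : R -> R -> R) : Prop :=
  forall x y, 0 <= x -> 0 <= y -> forall eps, 0 < eps -> exists delta, 0 < delta /\
    forall x' y', 0 <= x' -> 0 <= y' -> Rabs (x' - x) < delta -> Rabs (y' - y) < delta ->
      Rabs (f x' y' - f x y) < eps.

Definition C1_nonneg (g : R -> R) : Prop :=
  exists g' : R -> R, cont_nonneg g' /\
    forall t, 0 <= t -> forall eps, 0 < eps -> exists delta, 0 < delta /\
      forall h, h <> 0 -> 0 <= t + h -> Rabs h < delta ->
        Rabs ((g (t + h) - g t) / h - g' t) < eps.

Definition nondecr_nonneg (g : R -> R) : Prop :=
  forall x y, 0 <= x -> x <= y -> g x <= g y.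

Definition G (x0 x : R) : R := Rint (fun s => 1 / ((s + 1) * ln (s + 1))) x0 x.

Definition Ginv (x0 y : R) : R := exp (exp y * ln (x0 + 1)) - 1.

Definition Psi (x0 n : R) (w : R -> R) (x : R) : R :=
  Rint (fun s => 1 / w (rpow (Ginv x0 s) (1 / n))) 1 x.

Definition Psi_inv (x0 n : R) (w : R -> R) (y : R) : R :=
  epsilon (inhabits 0) (fun x => 0 < x /\ Psi x0 n w x = y).

Definition in_Dom_Psi_inv (x0 n : R) (w : R -> R) (y : R) : Prop :=
  exists x, 0 < x /\ Psi x0 n w x = y.

(* Main.v *)
Require Import Defs.
From Stdlib Require Import Reals Lra Psatz ClassicalEpsilon FunctionalExtensionality.
Open Scope R_scope.

Lemma Rint_RI g a b (pr : Riemann_integrable g a b) : Rint g a b = RiemannInt pr.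
Proof.
  unfold Rint.
  destruct (epsilon_spec (inhabits 0) (fun I => exists pr, RiemannInt pr = I)
    (ex_intro _ (RiemannInt pr) (ex_intro _ pr eq_refl))) as [pr' H].
  rewrite <- H. apply RiemannInt_P5.
Qed.

Definition Cab (g : R -> R) a b := forall x, a <= x <= b -> continuity_pt g x.

Lemma Rint_aa g a : Rint g a a = 0.
Proof. rewrite (Rint_RI _ _ _ (RiemannInt_P7 g a)). apply RiemannInt_P9. Qed.

Lemma Rint_chasles g a m b : a <= m -> m <= b -> Cab g a b ->
  Rint g a b = Rint g a m + Rint g m b.
Proof.
  intros h1 h2 C.
  assert (p1 : Riemann_integrable g a m).
  { apply continuity_implies_RiemannInt; auto. intros; apply C; lra. }
  assert (p2 : Riemann_integrable g m b).
  { apply continuity_implies_RiemannInt; auto. intros; apply C; lra. }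
  assert (p3 : Riemann_integrable g a b).
  { apply continuity_implies_RiemannInt; auto. lra. }
  rewrite (Rint_RI _ _ _ p1), (Rint_RI _ _ _ p2), (Rint_RI _ _ _ p3).
  symmetry; apply RiemannInt_P26.
Qed.

Lemma Rint_mono g h a b : a <= b -> Cab g a b -> Cab h a b ->
  (forall x, a <= x <= b -> g x <= h x) -> Rint g a b <= Rint h a b.
Proof.
  intros hab C1 C2 H.
  assert (p1 : Riemann_integrable g a b) by (apply continuity_implies_RiemannInt; auto).
  assert (p2 : Riemann_integrable h a b) by (apply continuity_implies_RiemannInt; auto).
  rewrite (Rint_RI _ _ _ p1), (Rint_RI _ _ _ p2).
  apply RiemannInt_P19; auto. intros; apply H; lra.
Qed.

Lemma Rint_ext g h a b : a <= b -> Cab g a b ->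
  (forall x, a <= x <= b -> g x = h x) -> Rint g a b = Rint h a b.
Proof.
  intros hab C H.
  assert (p1 : Riemann_integrable g a b) by (apply continuity_implies_RiemannInt; auto).
  assert (p2 : Riemann_integrable h a b).
  { apply Riemann_integrable_ext with g; auto.
    rewrite Rmin_left, Rmax_right; auto. }
  rewrite (Rint_RI _ _ _ p1), (Rint_RI _ _ _ p2).
  apply RiemannInt_P18; auto. intros; apply H; lra.
Qed.

Lemma Rint_nonneg g a b : a <= b -> Cab g a b ->
  (forall x, a <= x <= b -> 0 <= g x) -> 0 <= Rint g a b.
Proof.
  intros hab C H.
  replace 0 with (Rint (fun _ => 0) a b).
  - apply Rint_mono; auto. intros x _; apply continuity_pt_const; intros ? ?; auto.
  - change (fun _ : R => 0) with (fct_cte 0). rewrite (Rint_RI _ _ _ (RiemannInt_P14 a b 0)).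
    rewrite RiemannInt_P15. ring.
Qed.

Lemma Rint_prim g a b : a <= b -> Cab g a b ->
  exists P, (forall x, a <= x <= b -> derivable_pt_lim P x (g x)) /\
            (forall x, a <= x <= b -> P x = Rint g a x).
Proof.
  intros h C.
  exists (primitive h (FTC_P1 h C)). split.
  - intros x hx; apply RiemannInt_P28; auto.
  - intros x [h1 h2]. unfold primitive.
    destruct (Rle_dec a x); [|lra]. destruct (Rle_dec x b); [|lra].
    symmetry; apply Rint_RI.
Qed.

Lemma Rint_FTC g F a b : a <= b -> Cab g a b ->
  (forall x, a <= x <= b -> derivable_pt_lim F x (g x)) -> Rint g a b = F b - F a.
Proof.
  intros h C D.
  destruct (Rint_prim g a b h C) as [P [DP EP]].
  destruct h as [h|h].
  - destruct (MVT_cor2 (fun x => F x - P x) (fun x => g x - g x) a b h) as [z [Hz _]].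
    + intros z hz. apply derivable_pt_lim_minus; auto.
    + rewrite <- (EP b) by lra. rewrite (EP a) in Hz by lra. rewrite Rint_aa in Hz.
      replace (g z - g z) with 0 in Hz by ring. lra.
  - subst. rewrite Rint_aa. ring.
Qed.

Lemma dlim_loc f1 f2 x l d : 0 < d -> (forall y, Rabs (y - x) < d -> f1 y = f2 y) ->
  derivable_pt_lim f2 x l -> derivable_pt_lim f1 x l.
Proof.
  intros hd E D eps he.
  destruct (D eps he) as [del Hd].
  assert (hm : 0 < Rmin del d) by (apply Rmin_pos; [apply cond_pos|auto]).
  exists (mkposreal _ hm). intros h hh0 hh. simpl in hh.
  rewrite (E (x + h)), (E x).
  - apply Hd; auto. apply Rlt_le_trans with (1 := hh); apply Rmin_l.
  - rewrite Rminus_diag, Rabs_R0; auto.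
  - replace (x + h - x) with h by ring. apply Rlt_le_trans with (1 := hh); apply Rmin_r.
Qed.

Lemma dlim_eq f x l l' : derivable_pt_lim f x l -> l = l' -> derivable_pt_lim f x l'.
Proof. intros; subst; auto. Qed.

Lemma dlim_cont f x l : derivable_pt_lim f x l -> continuity_pt f x.
Proof. intros H. apply derivable_continuous_pt. exists l. exact H. Qed.

Lemma int_gen g a b : (forall x, continuity_pt g x) -> Riemann_integrable g a b.
Proof.
  intros C. destruct (Rle_dec a b).
  - apply continuity_implies_RiemannInt; auto.
  - apply RiemannInt_P1, continuity_implies_RiemannInt; auto; lra.
Qed.

Lemma Rint_chasles_gen g a m b : (forall x, continuity_pt g x) ->
  Rint g a b = Rint g a m + Rint g m b.
Proof.
  intros C.
  rewrite (Rint_RI _ _ _ (int_gen g a m C)), (Rint_RI _ _ _ (int_gen g m b C)),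
    (Rint_RI _ _ _ (int_gen g a b C)).
  symmetry; apply RiemannInt_P26.
Qed.

Lemma Rint_deriv g a y0 : (forall x, continuity_pt g x) ->
  derivable_pt_lim (fun y => Rint g a y) y0 (g y0).
Proof.
  intros C.
  set (lo := Rmin a y0 - 1). set (hi := Rmax a y0 + 1).
  assert (hlh : lo <= hi).
  { unfold lo, hi. pose proof (Rmin_l a y0); pose proof (Rmax_l a y0); lra. }
  destruct (Rint_prim g lo hi hlh (fun x _ => C x)) as [P [DP EP]].
  apply dlim_loc with (f2 := fun y => P y - P a) (d := 1); [lra| |].
  - intros y hy. rewrite EP, EP.
    + rewrite (Rint_chasles_gen g lo a y C). ring.
    + unfold lo, hi. pose proof (Rmin_l a y0); pose proof (Rmax_l a y0); lra.
    + unfold lo, hi. pose proof (Rmin_r a y0); pose proof (Rmax_r a y0).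
      apply Rabs_def2 in hy. lra.
  - apply dlim_eq with (g y0 - 0); [|ring].
    apply (derivable_pt_lim_minus P (fun _ => P a)).
    + apply DP. unfold lo, hi. pose proof (Rmin_r a y0); pose proof (Rmax_r a y0); lra.
    + apply derivable_pt_lim_const.
Qed.
Lemma Rmax0_lip x y : Rabs (Rmax 0 y - Rmax 0 x) <= Rabs (y - x).
Proof. unfold Rmax; destruct (Rle_dec 0 y), (Rle_dec 0 x); unfold Rabs;
  repeat destruct Rcase_abs; lra. Qed.

Lemma cont_unfold f x : (forall eps, 0 < eps -> exists d, 0 < d /\
   forall y, Rabs (y - x) < d -> Rabs (f y - f x) < eps) -> continuity_pt f x.
Proof.
  intros H. unfold continuity_pt, continue_in, limit1_in, limit_in; simpl; unfold R_dist.
  intros eps he. destruct (H eps he) as [d [hd Hd]]. exists d; split; auto.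
  intros y [_ hy]; auto.
Qed.

Lemma cont_fold f x : continuity_pt f x -> forall eps, 0 < eps -> exists d, 0 < d /\
   forall y, Rabs (y - x) < d -> Rabs (f y - f x) < eps.
Proof.
  unfold continuity_pt, continue_in, limit1_in, limit_in; simpl; unfold R_dist.
  intros H eps he. destruct (H eps he) as [d [hd Hd]]. exists d; split; auto.
  intros y hy. destruct (Req_dec x y) as [<-|hne].
  - rewrite Rminus_diag, Rabs_R0; auto.
  - apply Hd. split; auto. split; auto. exact I.
Qed.

Lemma cn_CP g : cont_nonneg g -> forall x, continuity_pt (fun y => g (Rmax 0 y)) x.
Proof.
  intros C x. apply cont_unfold. intros eps he.
  assert (h0 : 0 <= Rmax 0 x) by apply Rmax_l.
  destruct (C _ h0 eps he) as [d [hd Hd]]. exists d; split; auto.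
  intros y hy. apply Hd. apply Rmax_l. eapply Rle_lt_trans; [apply Rmax0_lip|]; auto.
Qed.

Lemma cn2_CP f t : cont2_nonneg f -> 0 <= t -> forall x, continuity_pt (fun y => f t (Rmax 0 y)) x.
Proof.
  intros C ht x. apply cont_unfold. intros eps he.
  assert (h0 : 0 <= Rmax 0 x) by apply Rmax_l.
  destruct (C _ _ ht h0 eps he) as [d [hd Hd]]. exists d; split; auto.
  intros y hy. apply Hd; auto. apply Rmax_l. rewrite Rminus_diag, Rabs_R0; auto.
  eapply Rle_lt_trans; [apply Rmax0_lip|]; auto.
Qed.

Lemma rpow_nonneg x a : 0 <= rpow x a.
Proof. unfold rpow; destruct Rlt_dec; [unfold Rpower; left; apply exp_pos|lra]. Qed.

Lemma rpow_pos x a : 0 < x -> 0 < rpow x a.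
Proof. intros h; unfold rpow; destruct Rlt_dec; [unfold Rpower; apply exp_pos|lra]. Qed.

Lemma Rpower_lt_base x y a : 0 < a -> 0 < x -> x < y -> Rpower x a < Rpower y a.
Proof. intros ha hx hxy. unfold Rpower. apply exp_increasing.
  apply Rmult_lt_compat_l; auto. apply ln_increasing; auto. Qed.

Lemma rpow_le x y a : 0 < a -> 0 <= x -> x <= y -> rpow x a <= rpow y a.
Proof.
  intros ha hx hxy. unfold rpow.
  destruct (Rlt_dec 0 x), (Rlt_dec 0 y); try lra.
  - destruct hxy as [h|h]; [left; apply Rpower_lt_base; auto| subst; lra].
  - left; unfold Rpower; apply exp_pos.
Qed.

Lemma rpow_inv x n : 0 < n -> 0 <= x -> rpow (rpow x n) (1 / n) = x.
Proof.
  intros hn hx. unfold rpow at 2.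
  destruct (Rlt_dec 0 x).
  - unfold rpow. destruct Rlt_dec.
    + rewrite Rpower_mult. replace (n * (1 / n)) with 1 by (field; lra). apply Rpower_1; auto.
    + exfalso; apply n0; unfold Rpower; apply exp_pos.
  - unfold rpow; destruct Rlt_dec; lra.
Qed.

Lemma rpow_cont a x : 0 < a -> continuity_pt (fun y => rpow y a) x.
Proof.
  intros ha. destruct (Rtotal_order x 0) as [hx|[hx|hx]].
  - apply dlim_cont with 0.
    apply dlim_loc with (f2 := fct_cte 0) (d := - x); [lra| |apply derivable_pt_lim_const].
    intros y hy. apply Rabs_def2 in hy. unfold rpow, fct_cte; destruct Rlt_dec; lra.
  - subst. apply cont_unfold. intros eps he.
    exists (Rpower eps (1 / a)). split; [unfold Rpower; apply exp_pos|].
    intros y hy. unfold rpow at 2. destruct (Rlt_dec 0 0); [lra|].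
    rewrite Rminus_0_r in *. unfold rpow. destruct Rlt_dec.
    + rewrite Rabs_right by (left; unfold Rpower; apply exp_pos).
      rewrite Rabs_right in hy by lra.
      replace eps with (Rpower (Rpower eps (1 / a)) a).
      * apply Rpower_lt_base; auto.
      * rewrite Rpower_mult. replace (1 / a * a) with 1 by (field; lra). apply Rpower_1; auto.
    + rewrite Rabs_R0; auto.
  - apply dlim_cont with (a * Rpower x (a - 1)).
    apply dlim_loc with (f2 := fun y => Rpower y a) (d := x); [lra| |apply derivable_pt_lim_power; lra].
    intros y hy. apply Rabs_def2 in hy. unfold rpow; destruct Rlt_dec; lra.
Qed.

Definition ell x0 x := ln (ln (x + 1)) - ln (ln (x0 + 1)).

Lemma ln_pos1 x : 0 < x -> 0 < ln (x + 1).
Proof. intros; rewrite <- ln_1; apply ln_increasing; lra. Qed.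

Lemma Ginv_ell x0 x : 0 < x0 -> 0 < x -> Ginv x0 (ell x0 x) = x.
Proof.
  intros h0 h. pose proof (ln_pos1 _ h0). pose proof (ln_pos1 _ h).
  assert (E : exp (ell x0 x) = ln (x + 1) / ln (x0 + 1)).
  { unfold ell, Rminus. rewrite exp_plus, exp_Ropp, !exp_ln by auto; reflexivity. }
  unfold Ginv. rewrite E.
  replace (ln (x + 1) / ln (x0 + 1) * ln (x0 + 1)) with (ln (x + 1)) by (field; lra).
  rewrite exp_ln by lra. ring.
Qed.

Lemma Ginv_pos x0 s : 0 < x0 -> 0 < Ginv x0 s.
Proof.
  intros h. unfold Ginv. pose proof (ln_pos1 _ h). pose proof (exp_pos s).
  assert (1 < exp (exp s * ln (x0 + 1))).
  { assert (hp : 0 < exp s * ln (x0 + 1)) by (apply Rmult_lt_0_compat; auto).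
    pose proof (exp_increasing _ _ hp) as he. rewrite exp_0 in he. exact he. }
  lra.
Qed.

Lemma Ginv_mono x0 y1 y2 : 0 < x0 -> y1 <= y2 -> Ginv x0 y1 <= Ginv x0 y2.
Proof.
  intros h [hl|he]; [|subst; lra].
  unfold Ginv. pose proof (ln_pos1 _ h).
  assert (exp (exp y1 * ln (x0 + 1)) < exp (exp y2 * ln (x0 + 1))); [|lra].
  apply exp_increasing. apply Rmult_lt_compat_r; auto. apply exp_increasing; auto.
Qed.

Lemma Ginv_cont x0 s : continuity_pt (Ginv x0) s.
Proof.
  apply dlim_cont with (exp (exp s * ln (x0 + 1)) * (exp s * ln (x0 + 1)) - 0).
  unfold Ginv.
  apply (derivable_pt_lim_minus (fun s => exp (exp s * ln (x0 + 1))) (fct_cte 1)).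
  - apply (derivable_pt_lim_comp (fun s => exp s * ln (x0 + 1)) exp).
    + apply derivable_pt_lim_scal_right, derivable_pt_lim_exp.
    + apply derivable_pt_lim_exp.
  - apply derivable_pt_lim_const.
Qed.

Definition psi x0 n (w : R -> R) s := 1 / w (rpow (Ginv x0 s) (1 / n)).

Lemma psi_pos x0 n w s : 0 < x0 -> (forall x, 0 < x -> 0 < w x) -> 0 < psi x0 n w s.
Proof.
  intros h hw. unfold psi. apply Rdiv_lt_0_compat; [lra|]. apply hw, rpow_pos, Ginv_pos; auto.
Qed.

Lemma psi_cont x0 n w s : 0 < x0 -> 0 < n -> cont_nonneg w ->
  (forall x, 0 < x -> 0 < w x) -> continuity_pt (psi x0 n w) s.
Proof.
  intros h hn C hw.
  assert (E : psi x0 n w = fun s => fct_cte 1 s /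
     (comp (fun y => w (Rmax 0 y)) (fun s => rpow (Ginv x0 s) (1 / n))) s).
  { extensionality t. unfold psi, comp, fct_cte. rewrite Rmax_right; auto. apply rpow_nonneg. }
  rewrite E. change (continuity_pt (fct_cte 1 / (comp (fun y => w (Rmax 0 y)) (fun s => rpow (Ginv x0 s) (1 / n)))) s).
  apply continuity_pt_div.
  - apply continuity_pt_const. intros ? ?; reflexivity.
  - apply continuity_pt_comp; [|apply cn_CP; auto].
    change (continuity_pt (comp (fun y => rpow y (1 / n)) (Ginv x0)) s).
    apply continuity_pt_comp; [apply Ginv_cont|]. apply rpow_cont.
    apply Rdiv_lt_0_compat; lra.
  - unfold comp. rewrite Rmax_right by apply rpow_nonneg.
    apply Rgt_not_eq, hw, rpow_pos, Ginv_pos; auto.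
Qed.

Lemma Psi_deriv x0 n w y : 0 < x0 -> 0 < n -> cont_nonneg w ->
  (forall x, 0 < x -> 0 < w x) -> derivable_pt_lim (Psi x0 n w) y (psi x0 n w y).
Proof.
  intros h hn C hw. unfold Psi. fold (psi x0 n w).
  apply Rint_deriv. intros; apply psi_cont; auto.
Qed.

Lemma Psi_strict x0 n w x y : 0 < x0 -> 0 < n -> cont_nonneg w ->
  (forall x, 0 < x -> 0 < w x) -> x < y -> Psi x0 n w x < Psi x0 n w y.
Proof.
  intros h hn C hw hxy.
  destruct (MVT_cor2 (Psi x0 n w) (psi x0 n w) x y hxy) as [z [Hz _]].
  - intros; apply Psi_deriv; auto.
  - pose proof (psi_pos x0 n w z h hw).
    assert (0 < psi x0 n w z * (y - x)) by (apply Rmult_lt_0_compat; lra). lra.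
Qed.

Lemma Psi_cont x0 n w : 0 < x0 -> 0 < n -> cont_nonneg w ->
  (forall x, 0 < x -> 0 < w x) -> continuity (Psi x0 n w).
Proof. intros h hn C hw y. eapply dlim_cont, Psi_deriv; eauto. Qed.

Lemma dl_ell x0 s : 0 < s -> derivable_pt_lim (ell x0) s (1 / ((s + 1) * ln (s + 1))).
Proof.
  intros hs. pose proof (ln_pos1 _ hs).
  unfold ell.
  apply dlim_eq with ((/ ln (s + 1)) * (/ (s + 1) * (1 + 0)) - 0).
  - apply (derivable_pt_lim_minus (fun x => ln (ln (x + 1))) (fct_cte (ln (ln (x0 + 1))))).
    + apply (derivable_pt_lim_comp (fun x => ln (x + 1)) ln).
      * apply (derivable_pt_lim_comp (fun x => x + 1) ln).
        -- apply (derivable_pt_lim_plus id (fct_cte 1)).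
           ++ apply derivable_pt_lim_id.
           ++ apply derivable_pt_lim_const.
        -- apply derivable_pt_lim_ln; lra.
      * apply derivable_pt_lim_ln; auto.
    + apply derivable_pt_lim_const.
  - field; lra.
Qed.

Lemma G_ell x0 c : 0 < x0 -> x0 <= c -> G x0 c = ell x0 c.
Proof.
  intros h hc. unfold G.
  rewrite (Rint_FTC _ (ell x0)); auto.
  - unfold ell at 2. ring.
  - intros x hx. assert (hx0 : 0 < x) by lra. pose proof (ln_pos1 _ hx0).
    assert (D1 : derivable_pt_lim (fun x => x + 1) x (1 + 0)).
    { apply (derivable_pt_lim_plus id (fct_cte 1)).
      apply derivable_pt_lim_id. apply derivable_pt_lim_const. }
    assert (C1 : continuity_pt (fun s => (s + 1) * ln (s + 1)) x).
    { apply dlim_cont with ((1 + 0) * ln (x + 1) + (x + 1) * (/ (x + 1) * (1 + 0))).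
      apply (derivable_pt_lim_mult (fun x => x + 1) (fun x => ln (x + 1))); auto.
      apply (derivable_pt_lim_comp (fun x => x + 1) ln); auto.
      apply derivable_pt_lim_ln; lra. }
    change (continuity_pt (fct_cte 1 / (fun s => (s + 1) * ln (s + 1))) x).
    apply continuity_pt_div; auto.
    + apply continuity_pt_const. intros ? ?; reflexivity.
    + apply Rgt_not_eq. apply Rmult_lt_0_compat; lra.
  - intros x hx. apply dl_ell. lra.
Qed.

Lemma ln_le a b : 0 < a -> a <= b -> ln a <= ln b.
Proof. intros h [hl|he]; [left; apply ln_increasing; auto|subst; lra]. Qed.

Lemma ln_ge0 a : 1 <= a -> 0 <= ln a.
Proof. intros h. rewrite <- ln_1. apply ln_le; lra. Qed.

Lemma key_ineq x V fT wu W : 0 < x -> 0 <= V <= x -> 0 <= fT -> 0 <= wu <= W -> 0 < W ->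
  1 / W * (1 / ((x + 1) * ln (x + 1)) * (0 + fT * (V + 1) * ln (V + 1) * wu)) - fT <= 0.
Proof.
  intros hx hV hf hw hW. pose proof (ln_pos1 _ hx) as hL.
  assert (l1 : 0 <= ln (V + 1)) by (apply ln_ge0; lra).
  assert (l2 : ln (V + 1) <= ln (x + 1)) by (apply ln_le; lra).
  set (D := (x + 1) * ln (x + 1) * W).
  set (Q := (V + 1) * ln (V + 1) * wu).
  assert (hD : 0 < D) by (unfold D; apply Rmult_lt_0_compat; [apply Rmult_lt_0_compat|]; lra).
  assert (hQ : Q <= D).
  { unfold Q, D. apply Rmult_le_compat; try lra.
    - apply Rmult_le_pos; lra.
    - apply Rmult_le_compat; lra. }
  assert (hQ0 : 0 <= Q) by (unfold Q; apply Rmult_le_pos; [apply Rmult_le_pos|]; lra).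
  replace (1 / W * (1 / ((x + 1) * ln (x + 1)) * (0 + fT * (V + 1) * ln (V + 1) * wu)))
    with (fT * (Q / D)) by (unfold Q, D; field; lra).
  assert (Q / D <= 1).
  { apply Rmult_le_reg_r with D; auto. unfold Rdiv. rewrite Rmult_assoc, Rinv_l; lra. }
  assert (fT * (Q / D) <= fT * 1) by (apply Rmult_le_compat_l; auto). lra.
Qed.

Definition kt (n : R) (f : R -> R -> R) (w u : R -> R) t s :=
  f t s * (rpow (u s) n + 1) * ln (rpow (u s) n + 1) * w (u s).

Lemma kt_cont n f w u t : 0 < n -> cont2_nonneg f -> cont_nonneg w -> cont_nonneg u ->
  (forall t, 0 <= t -> 0 <= u t) -> 0 <= t ->
  forall x, continuity_pt (fun y => kt n f w u t (Rmax 0 y)) x.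
Proof.
  intros hn Cf Cw Cu hu ht x.
  set (U := fun y => u (Rmax 0 y)).
  set (V := comp (fun y => rpow y n) U).
  assert (E : (fun y => kt n f w u t (Rmax 0 y)) =
    mult_fct (mult_fct (mult_fct (fun y => f t (Rmax 0 y)) (plus_fct V (fct_cte 1)))
      (comp ln (plus_fct V (fct_cte 1)))) (comp (fun z => w (Rmax 0 z)) U)).
  { extensionality y. unfold kt, mult_fct, plus_fct, comp, V, U, fct_cte.
    rewrite (Rmax_right 0 (u (Rmax 0 y))); auto. apply hu, Rmax_l. }
  assert (CU : continuity_pt U x) by (apply cn_CP; auto).
  assert (CV : continuity_pt V x).
  { apply continuity_pt_comp; auto. apply rpow_cont; auto. }
  assert (CV1 : continuity_pt (plus_fct V (fct_cte 1)) x).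
  { apply continuity_pt_plus; auto. apply continuity_pt_const; intros ? ?; reflexivity. }
  rewrite E. apply continuity_pt_mult; [apply continuity_pt_mult; [apply continuity_pt_mult|]|].
  - apply cn2_CP; auto.
  - auto.
  - apply continuity_pt_comp; auto.
    assert (hp : 0 < plus_fct V (fct_cte 1) x).
    { unfold plus_fct, fct_cte. pose proof (rpow_nonneg (U x) n). unfold V, comp. lra. }
    apply dlim_cont with (/ plus_fct V (fct_cte 1) x). apply derivable_pt_lim_ln; auto.
  - apply continuity_pt_comp; auto. apply cn_CP; auto.
Qed.

Theorem corollary2
  (n c x0 : R) (f : R -> R -> R) (w alpha u : R -> R)
  (Hn : 0 < n) (Hc : 0 < c) (Hx0 : 0 < x0) (Hx0c : x0 < c)
  (Hf_cont : cont2_nonneg f)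
  (Hf_nonneg : forall t s, 0 <= t -> 0 <= s -> 0 <= f t s)
  (Hf_mono : forall s t1 t2, 0 <= s -> 0 <= t1 -> t1 <= t2 -> f t1 s <= f t2 s)
  (Hw_cont : cont_nonneg w)
  (Hw_nonneg : forall x, 0 <= x -> 0 <= w x)
  (Hw_mono : nondecr_nonneg w)
  (Hw_pos : forall x, 0 < x -> 0 < w x)
  (Ha_C1 : C1_nonneg alpha)
  (Ha_nonneg : forall t, 0 <= t -> 0 <= alpha t)
  (Ha_mono : nondecr_nonneg alpha)
  (Ha_le : forall t, 0 <= t -> alpha t <= t)
  (Hu_cont : cont_nonneg u)
  (Hu_nonneg : forall t, 0 <= t -> 0 <= u t)
  (Hineq : forall t, 0 <= t ->
     rpow (u t) n <= c + Rint (fun s => f t s * (rpow (u s) n + 1)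
                                  * ln (rpow (u s) n + 1) * w (u s)) 0 (alpha t)) :
  exists tau, 0 < tau /\
    forall t, 0 <= t -> t <= tau ->
      in_Dom_Psi_inv x0 n w (Psi x0 n w (G x0 c) + Rint (fun s => f t s) 0 (alpha t)) /\
      u t <= rpow (Ginv x0 (Psi_inv x0 n w
                    (Psi x0 n w (G x0 c) + Rint (fun s => f t s) 0 (alpha t)))) (1 / n).
Proof.
  rewrite (G_ell x0 c Hx0) by lra.
  set (Gc := ell x0 c).
  assert (hGc : 0 < Gc).
  { unfold Gc, ell. pose proof (ln_pos1 _ Hx0).
    assert (ln (ln (x0 + 1)) < ln (ln (c + 1))); [|lra].
    apply ln_increasing; auto. apply ln_increasing; lra. }
  set (D0 := Psi x0 n w (Gc + 1) - Psi x0 n w Gc).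
  assert (hD0 : 0 < D0).
  { unfold D0. pose proof (Psi_strict x0 n w Gc (Gc + 1) Hx0 Hn Hw_cont Hw_pos). lra. }
  assert (C1 : Cab (fun y => f 1 (Rmax 0 y)) 0 1).
  { intros x _; apply cn2_CP; auto; lra. }
  destruct (Rint_prim _ 0 1 ltac:(lra) C1) as [P1 [DP1 EP1]].
  destruct (cont_fold P1 0 (dlim_cont _ _ _ (DP1 0 ltac:(lra))) D0 hD0) as [del [hdel Hdel]].
  assert (P10 : P1 0 = 0) by (rewrite EP1 by lra; apply Rint_aa).
  exists (Rmin 1 (del / 2)). split.
  { apply Rmin_pos; lra. }
  intros T hT0 hTt.
  assert (hT1 : T <= 1) by (pose proof (Rmin_l 1 (del / 2)); lra).
  assert (hTd : T < del) by (pose proof (Rmin_r 1 (del / 2)); lra).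
  set (A := alpha T).
  assert (hA : 0 <= A <= T) by (split; [apply Ha_nonneg|apply Ha_le]; auto).
  set (fT := fun y => f T (Rmax 0 y)).
  assert (CfT : forall x, continuity_pt fT x) by (intros; apply cn2_CP; auto).
  assert (FE : Rint (fun s => f T s) 0 A = Rint fT 0 A).
  { symmetry; apply Rint_ext; [lra|intros x _; auto|].
    intros x hx. unfold fT. rewrite Rmax_right; lra. }
  set (F := Rint (fun s => f T s) 0 A).
  assert (hF0 : 0 <= F).
  { unfold F; rewrite FE. apply Rint_nonneg; [lra|intros x _; auto|].
    intros x hx; unfold fT. apply Hf_nonneg; auto. apply Rmax_l. }
  assert (hFD : F < D0).
  { unfold F; rewrite FE.
    apply Rle_lt_trans with (P1 A).
    - rewrite EP1 by lra. apply Rint_mono; [lra|intros x _; auto|intros x _; apply cn2_CP; auto; lra|].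
      intros x hx. unfold fT. apply Hf_mono; auto. apply Rmax_l.
    - assert (Rabs (A - 0) < del) by (rewrite Rminus_0_r, Rabs_right; lra).
      specialize (Hdel A H). rewrite P10, Rminus_0_r in Hdel.
      apply Rabs_def2 in Hdel. lra. }
  assert (Dom : in_Dom_Psi_inv x0 n w (Psi x0 n w Gc + F)).
  { destruct (IVT_cor (fun x => Psi x0 n w x - (Psi x0 n w Gc + F)) Gc (Gc + 1)) as [z [hz Ez]].
    - apply continuity_minus; [apply Psi_cont; auto|apply continuity_const; intros ? ?; auto].
    - lra.
    - simpl. fold D0. unfold D0 in hFD.
      unfold D0 in *. set (a := Psi x0 n w Gc) in *. set (b := Psi x0 n w (Gc + 1)) in *. nra.
    - exists z. split; [lra|]. simpl in Ez. lra. }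
  split; [exact Dom|].
  unfold Psi_inv.
  destruct (epsilon_spec (inhabits 0) (fun x => 0 < x /\ Psi x0 n w x = Psi x0 n w Gc + F) Dom)
    as [hy' Ey'].
  set (y' := epsilon _ _) in *.
  set (kT := fun y => kt n f w u T (Rmax 0 y)).
  assert (CkT : forall x, continuity_pt kT x) by (intros; apply kt_cont; auto).
  assert (kt_nn : forall t y, 0 <= t -> 0 <= y -> 0 <= kt n f w u t y).
  { intros t y ht hy. unfold kt. pose proof (rpow_nonneg (u y) n).
    apply Rmult_le_pos; [apply Rmult_le_pos; [apply Rmult_le_pos|]|]; try lra.
    - apply Hf_nonneg; auto.
    - apply ln_ge0; lra.
    - apply Hw_nonneg, Hu_nonneg; auto. }
  assert (kT_nn : forall y, 0 <= kT y) by (intros; apply kt_nn; [lra|apply Rmax_l]).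
  destruct (Rint_prim kT 0 A ltac:(lra) (fun x _ => CkT x)) as [Pk [DPk EPk]].
  destruct (Rint_prim fT 0 A ltac:(lra) (fun x _ => CfT x)) as [Pf [DPf EPf]].
  assert (Pk_nn : forall x, 0 <= x <= A -> 0 <= Pk x).
  { intros x hx. rewrite EPk by lra. apply Rint_nonneg; [lra|intros y _; auto|intros; auto]. }
  assert (Hext : forall t b, 0 <= t -> 0 <= b ->
     Rint (fun s => f t s * (rpow (u s) n + 1) * ln (rpow (u s) n + 1) * w (u s)) 0 b
     = Rint (fun y => kt n f w u t (Rmax 0 y)) 0 b).
  { intros t b ht hb. symmetry. apply Rint_ext; auto.
    - intros x _. apply kt_cont; auto.
    - intros x hx. rewrite Rmax_right by lra. reflexivity. }
  assert (VZ : forall s, 0 <= s <= A -> rpow (u s) n <= c + Pk s).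
  { intros s hs. pose proof (Hineq s ltac:(lra)) as H.
    rewrite Hext in H by (try apply Ha_nonneg; lra).
    assert (has : 0 <= alpha s <= s) by (split; [apply Ha_nonneg|apply Ha_le]; lra).
    assert (Rint (fun y => kt n f w u s (Rmax 0 y)) 0 (alpha s) <= Rint kT 0 (alpha s)).
    { apply Rint_mono; [lra|intros x _; apply kt_cont; auto; lra|intros x _; auto|].
      intros x hx. unfold kT, kt. pose proof (Rmax_l 0 x).
      pose proof (rpow_nonneg (u (Rmax 0 x)) n).
      apply Rmult_le_compat_r; [apply Hw_nonneg, Hu_nonneg; auto|].
      apply Rmult_le_compat_r; [apply ln_ge0; lra|].
      apply Rmult_le_compat_r; [lra|]. apply Hf_mono; auto; lra. }
    assert (Rint kT 0 (alpha s) <= Pk s).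
    { rewrite EPk by lra. rewrite (Rint_chasles kT 0 (alpha s) s); try lra.
      - assert (0 <= Rint kT (alpha s) s); [|lra].
        apply Rint_nonneg; [lra|intros y _; auto|intros; auto].
      - intros y _; auto. }
    lra. }
  assert (Key : Psi x0 n w (ell x0 (c + Pk A)) - Pf A <= Psi x0 n w Gc).
  { assert (K0 : Psi x0 n w (ell x0 (c + Pk 0)) - Pf 0 = Psi x0 n w Gc).
    { rewrite EPk, EPf by lra. rewrite !Rint_aa. rewrite Rplus_0_r, Rminus_0_r. reflexivity. }
    destruct (Rle_lt_or_eq_dec 0 A ltac:(lra)) as [hA0|hA0].
    2: { rewrite <- hA0. lra. }
    destruct (MVT_cor2 (fun r => Psi x0 n w (ell x0 (c + Pk r)) - Pf r)
      (fun r => psi x0 n w (ell x0 (c + Pk r)) * (1 / ((c + Pk r + 1) * ln (c + Pk r + 1)) * (0 + kT r)) - fT r)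
      0 A hA0) as [xi [Hxi hxi]].
    - intros r hr. pose proof (Pk_nn r hr).
      apply (derivable_pt_lim_minus (fun r => Psi x0 n w (ell x0 (c + Pk r))) Pf); [|apply DPf; auto].
      apply (derivable_pt_lim_comp (fun r => ell x0 (c + Pk r)) (Psi x0 n w)).
      + apply (derivable_pt_lim_comp (fun r => c + Pk r) (ell x0)).
        * apply (derivable_pt_lim_plus (fct_cte c) Pk); [apply derivable_pt_lim_const|apply DPk; auto].
        * apply dl_ell. lra.
      + apply Psi_deriv; auto.
    - assert (hxr : 0 <= xi <= A) by lra.
      pose proof (Pk_nn xi hxr). pose proof (VZ xi hxr).
      set (x := c + Pk xi) in *.
      assert (hx : 0 < x) by (unfold x; lra).
      unfold psi in Hxi. rewrite Ginv_ell in Hxi by auto.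
      unfold kT, fT, kt in Hxi. rewrite Rmax_right in Hxi by lra.
      assert (hu : 0 <= u xi) by (apply Hu_nonneg; lra).
      assert (hwu : w (u xi) <= w (rpow x (1 / n))).
      { apply Hw_mono; auto. rewrite <- (rpow_inv (u xi) n) by auto.
        apply rpow_le; [apply Rdiv_lt_0_compat; lra|apply rpow_nonneg|auto]. }
      assert (hW : 0 < w (rpow x (1 / n))) by (apply Hw_pos, rpow_pos; auto).
      pose proof (key_ineq x (rpow (u xi) n) (f T xi) (w (u xi)) (w (rpow x (1 / n))) hx
        ltac:(split; [apply rpow_nonneg|auto]) ltac:(apply Hf_nonneg; lra)
        ltac:(split; [apply Hw_nonneg; auto|auto]) hW) as HK.
      assert (Hm : forall a b : R, a <= 0 -> 0 < b -> a * (b - 0) <= 0) by (intros; nra).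
      pose proof (Hm _ A HK hA0). lra. }
  assert (PfA : Pf A = F) by (rewrite EPf by lra; unfold F; rewrite FE; reflexivity).
  assert (VT : rpow (u T) n <= c + Pk A).
  { pose proof (Hineq T hT0) as H. rewrite Hext in H by (try apply Ha_nonneg; lra).
    rewrite EPk by lra. exact H. }
  pose proof (Pk_nn A ltac:(lra)).
  set (Z := c + Pk A) in *.
  assert (hZ : ell x0 Z <= y').
  { destruct (Rle_or_lt (ell x0 Z) y') as [h|h]; auto.
    pose proof (Psi_strict x0 n w _ _ Hx0 Hn Hw_cont Hw_pos h). lra. }
  assert (Z <= Ginv x0 y').
  { rewrite <- (Ginv_ell x0 Z) by (auto; unfold Z; lra). apply Ginv_mono; auto. }
  rewrite <- (rpow_inv (u T) n) by auto.
  apply rpow_le; [apply Rdiv_lt_0_compat; lra|apply rpow_nonneg|lra].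
Qed.
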